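(* Suppose $d$ is twice differentiable on its domain $\{(\beta,c):c^2<1,\beta<2\sqrt{1-c^2}\}$. Fix $k<2$ and consider the curve $\Gamma_k=\{(\beta,c):0\le c<1,\ \beta=k\sqrt{1-c^2}\}$. Then $d_{cc}$ changes sign at most once along $\Gamma_k$. That is, there do not exist $0\le c_1<c_2<c_3<1$ such that the values $d_{cc}(k\sqrt{1-c_i^2},c_i)$, $i=1,2,3$, are nonzero and alternate in sign.
   Context: Setting: $p>1$, $f\in C^2$ homogeneous of degree $p$ (i.e. $f(\lambda s)=\lambda^pf(s)$ for $\lambda>0$), and $F=\int_0^sf$, taking a positive value somewhere. Definitions: - $I(u)=\int u_{xx}^2-\beta u_x^2+(1-c^2)u^2$ and $K(u)=(p+1)\int F(u)$. - $m(\beta,c)=\inf\{I/K^{2/(p+1)}:u\in H^2,K(u)>0\}$. - $d(\beta,c)=\frac{p-1}{2(p+1)}m(\beta,c)^{(p+1)/(p-1)}$. - $d_{cc}=\partial_c^2d$. *)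

(* Defs.v *)
From Stdlib Require Import Reals Lra Classical ClassicalEpsilon.
Open Scope R_scope.

(* Improper integral over R of a function that is Riemann integrable on
   every symmetric interval and whose integral stabilises (used only for
   compactly supported continuous integrands). *)
Definition integralR (g : R -> R) (v : R) : Prop :=
  exists R0, forall a, R0 <= a ->
    exists pr : Riemann_integrable g (- a) a, RiemannInt pr = v.

(* u is C^2 with compact support, with first and second derivatives u1, u2.
   This is the dense class C_c^2(R) of H^2(R). *)
Definition admissible (u u1 u2 : R -> R) : Prop :=
  (forall x, derivable_pt_lim u x (u1 x)) /\
  (forall x, derivable_pt_lim u1 x (u2 x)) /\
  continuity u2 /\
  exists Rs, forall x, Rs < Rabs x -> u x = 0.

Definition Ival (beta c : R) (u u1 u2 : R -> R) (v : R) : Prop :=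
  integralR (fun x => (u2 x)^2 - beta * (u1 x)^2 + (1 - c^2) * (u x)^2) v.

Definition Kval (p : R) (F : R -> R) (u : R -> R) (v : R) : Prop :=
  integralR (fun x => (p + 1) * F (u x)) v.

Definition quot_set (p : R) (F : R -> R) (beta c : R) (q : R) : Prop :=
  exists u u1 u2 Iv Kv,
    admissible u u1 u2 /\ Ival beta c u u1 u2 Iv /\ Kval p F u Kv /\
    0 < Kv /\ q = Iv / Rpower Kv (2 / (p + 1)).

Definition is_lower_bound (E : R -> Prop) (m : R) : Prop :=
  forall x, E x -> m <= x.
Definition is_glb (E : R -> Prop) (m : R) : Prop :=
  is_lower_bound E m /\ (forall b, is_lower_bound E b -> b <= m).

(* infimum (chosen; unspecified if the glb does not exist) *)
Definition inf_of (E : R -> Prop) : R :=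
  epsilon (inhabits 0) (fun m => is_glb E m).

Definition m_fun (p : R) (F : R -> R) (beta c : R) : R :=
  inf_of (quot_set p F beta c).

Definition d_fun (p : R) (F : R -> R) (beta c : R) : R :=
  (p - 1) / (2 * (p + 1)) * Rpower (m_fun p F beta c) ((p + 1) / (p - 1)).

Definition dom (beta c : R) : Prop := c^2 < 1 /\ beta < 2 * sqrt (1 - c^2).

Definition frechet_at (g : R -> R -> R) (x y gx gy : R) : Prop :=
  forall eps, 0 < eps -> exists delta, 0 < delta /\
    forall h k, sqrt (h^2 + k^2) < delta ->
      Rabs (g (x + h) (y + k) - g x y - gx * h - gy * k)
        <= eps * sqrt (h^2 + k^2).

Definition diff_on_dom (g D1 D2 : R -> R -> R) : Prop :=
  forall beta c, dom beta c -> frechet_at g beta c (D1 beta c) (D2 beta c).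

(* Main.v *)
Require Import Defs.
From Stdlib Require Import Reals.
From Coquelicot Require Import Coquelicot.
From Stdlib Require Import Reals Lra Psatz Classical ClassicalEpsilon FunctionalExtensionality PropExtensionality.
Open Scope R_scope.

Lemma iR_iff g v : integralR g v <-> exists R0, forall a, R0 <= a -> is_RInt g (-a) a v.
Proof.
split.
- intros [R0 H]. exists R0. intros a Ha. destruct (H a Ha) as [pr Hpr].
  assert (E : ex_RInt g (-a) a) by (apply ex_RInt_Reals_1; exact pr).
  rewrite <- Hpr, <- (RInt_Reals g (-a) a pr). exact (RInt_correct _ _ _ E).
- intros [R0 H]. exists R0. intros a Ha.
  assert (E : ex_RInt g (-a) a) by (eexists; apply H; exact Ha).
  exists (ex_RInt_Reals_0 _ _ _ E). rewrite <- RInt_Reals.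
  apply (is_RInt_unique (V:=R_CompleteNormedModule)). apply H; exact Ha.
Qed.

Lemma iR_unique g v v' : integralR g v -> integralR g v' -> v = v'.
Proof.
rewrite !iR_iff. intros [R0 H] [R1 H'].
assert (H1 := H (Rmax R0 R1) (Rmax_l _ _)).
assert (H2 := H' (Rmax R0 R1) (Rmax_r _ _)).
apply (is_RInt_unique (V:=R_CompleteNormedModule)) in H1. apply (is_RInt_unique (V:=R_CompleteNormedModule)) in H2. congruence.
Qed.

Lemma iR_lin g1 g2 v1 v2 l1 l2 : integralR g1 v1 -> integralR g2 v2 ->
  integralR (fun x => l1 * g1 x + l2 * g2 x) (l1 * v1 + l2 * v2).
Proof.
rewrite !iR_iff. intros [R0 H] [R1 H']. exists (Rmax R0 R1). intros a Ha.
assert (H1 := H a (Rle_trans _ _ _ (Rmax_l _ _) Ha)).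
assert (H2 := H' a (Rle_trans _ _ _ (Rmax_r _ _) Ha)).
apply (is_RInt_scal _ _ _ l1) in H1. apply (is_RInt_scal _ _ _ l2) in H2.
exact (is_RInt_plus _ _ _ _ _ _ H1 H2).
Qed.

Lemma iR_ext g1 g2 v : (forall x, g1 x = g2 x) -> integralR g1 v -> integralR g2 v.
Proof. intros E H. replace g2 with g1 by (apply functional_extensionality; auto). exact H. Qed.

Lemma iR_ge0 g v : (forall x, 0 <= g x) -> integralR g v -> 0 <= v.
Proof.
rewrite iR_iff. intros Hg [R0 H]. set (a := Rmax R0 0).
apply (is_RInt_ge_0 g (-a) a). unfold a; pose proof (Rmax_r R0 0); lra.
apply H. apply Rmax_l. intros; apply Hg.
Qed.

Lemma iR_scale g v b : 0 < b -> integralR g v -> integralR (fun x => g (b * x)) (v / b).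
Proof.
rewrite !iR_iff. intros Hb [R0 H]. exists (R0 / b). intros a Ha.
assert (Hba : R0 <= b * a).
{ apply Rmult_le_compat_l with (r := b) in Ha; [|lra].
  replace (b * (R0 / b)) with R0 in Ha by (field; lra). exact Ha. }
assert (H1 := H _ Hba).
assert (H2 : is_RInt g (b * (-a) + 0) (b * a + 0) v).
{ replace (b * (-a) + 0) with (- (b * a)) by ring. replace (b*a+0) with (b*a) by ring. exact H1. }
apply is_RInt_comp_lin in H2.
apply (is_RInt_scal _ _ _ (/ b)) in H2.
replace (v / b) with (scal (/ b) v) by (unfold scal; simpl; unfold mult; simpl; field; lra).
eapply is_RInt_ext; [|exact H2].
intros x _. simpl. unfold scal; simpl; unfold mult; simpl.
replace (b * x + 0) with (b * x) by ring. field. lra.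
Qed.

Lemma is_RInt_zero_out g a b : (forall x, a < x < b -> g x = 0) -> a <= b -> is_RInt g a b 0.
Proof.
intros Hz Hab.
assert (H := is_RInt_const (V:=R_NormedModule) a b 0).
unfold scal in H; simpl in H; unfold mult in H; simpl in H. rewrite Rmult_0_r in H.
eapply is_RInt_ext; [|exact H]. intros x Hx. rewrite Rmin_left in Hx by lra.
rewrite Rmax_right in Hx by lra. symmetry; apply Hz; lra.
Qed.

Lemma iR_compact (g : R -> R) Rs : (forall x, continuous g x) -> (forall x, Rs < Rabs x -> g x = 0) ->
  exists v, integralR g v.
Proof.
intros Hc Hz. set (S := Rabs Rs + 1).
assert (HS : Rs < S /\ 0 < S) by (unfold S; split; pose proof (Rle_abs Rs); pose proof (Rabs_pos Rs); lra).
assert (E : ex_RInt g (-S) S) by (apply (ex_RInt_continuous (V:=R_CompleteNormedModule)); intros; apply Hc).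
exists (RInt g (-S) S). rewrite iR_iff. exists S. intros a Ha.
assert (H1 : is_RInt g (-a) (-S) 0).
{ apply is_RInt_zero_out; [|lra]. intros x Hx. apply Hz.
  rewrite Rabs_left by lra. lra. }
assert (H3 : is_RInt g S a 0).
{ apply is_RInt_zero_out; [|lra]. intros x Hx. apply Hz.
  rewrite Rabs_right by lra. lra. }
assert (H2 := RInt_correct (V:=R_CompleteNormedModule) _ _ _ E).
assert (H := is_RInt_Chasles _ _ _ _ _ _ (is_RInt_Chasles _ _ _ _ _ _ H1 H2) H3).
replace (RInt g (-S) S) with (plus (plus 0 (RInt g (-S) S)) 0) by (unfold plus; simpl; ring).
exact H.
Qed.

Lemma iR_ftc (h h' : R -> R) Rs : (forall x, derivable_pt_lim h x (h' x)) -> (forall x, continuous h' x) ->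
  (forall x, Rs < Rabs x -> h x = 0) -> integralR h' 0.
Proof.
intros Hd Hc Hz. rewrite iR_iff. exists (Rabs Rs + 1). intros a Ha.
assert (H := is_RInt_derive (V:=R_CompleteNormedModule) h h' (-a) a (fun x _ => proj2 (is_derive_Reals _ _ _) (Hd x)) (fun x _ => Hc x)).
unfold minus, plus, opp in H; simpl in H.
pose proof (Rle_abs Rs). pose proof (Rabs_pos Rs).
rewrite (Hz a), (Hz (-a)) in H. rewrite Ropp_0, Rplus_0_r in H. exact H.
all: try (rewrite Rabs_Ropp, Rabs_right; lra); try (rewrite Rabs_right; lra).
Qed.


Lemma cmul f g x : continuity_pt f x -> continuity_pt g x -> continuity_pt (fun y => f y * g y) x.
Proof. intros; exact (continuity_pt_mult f g x H H0). Qed.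
Lemma cadd f g x : continuity_pt f x -> continuity_pt g x -> continuity_pt (fun y => f y + g y) x.
Proof. intros; exact (continuity_pt_plus f g x H H0). Qed.
Lemma ccst (a x : R) : continuity_pt (fun _ => a) x.
Proof. exact (continuity_pt_const (fun _ => a) x (fun _ _ => eq_refl)). Qed.
Lemma ccomp (f g : R -> R) x : continuity_pt f x -> continuity_pt g (f x) -> continuity_pt (fun y => g (f y)) x.
Proof. intros; exact (continuity_pt_comp f g x H H0). Qed.
Lemma cder f x l : derivable_pt_lim f x l -> continuity_pt f x.
Proof. intro H. apply derivable_continuous_pt. exists l. exact H. Qed.

Lemma iR_compact' (g : R -> R) Rs : (forall x, continuity_pt g x) -> (forall x, Rs < Rabs x -> g x = 0) ->
  exists v, integralR g v.
Proof. intros Hc Hz. apply (iR_compact g Rs); auto. intro x. apply continuity_pt_filterlim. auto. Qed.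

Lemma deriv_local f g x l : derivable_pt_lim f x l ->
  (exists del, 0 < del /\ forall y, Rabs (y - x) < del -> f y = g y) -> derivable_pt_lim g x l.
Proof.
intros H [del [Hdel E]] eps Heps. destruct (H eps Heps) as [d Hd].
assert (Hm : 0 < Rmin d del) by (apply Rmin_pos; [apply cond_pos| exact Hdel]).
exists (mkposreal _ Hm). intros h Hh0 Hh. simpl in Hh.
rewrite <- (E (x + h)), <- (E x).
apply Hd; auto. apply Rlt_le_trans with (1 := Hh); apply Rmin_l.
replace (x - x) with 0 by ring. rewrite Rabs_R0; lra.
replace (x + h - x) with h by ring. apply Rlt_le_trans with (1 := Hh); apply Rmin_r.
Qed.

Lemma deriv_zero_near f x l : derivable_pt_lim f x l ->
  (exists del, 0 < del /\ forall y, Rabs (y - x) < del -> f y = 0) -> l = 0.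
Proof.
intros H E. apply (deriv_local f (fct_cte 0)) in H; [|exact E].
exact (uniqueness_limite _ _ _ _ H (derivable_pt_lim_const 0 x)).
Qed.

Lemma out_nbhd Rs x : Rs < Rabs x -> exists del, 0 < del /\ forall y, Rabs (y - x) < del -> Rs < Rabs y.
Proof.
intros H. exists (Rabs x - Rs). split. lra. intros y Hy.
pose proof (Rabs_triang_inv x y). rewrite <- Rabs_Ropp in Hy.
replace (- (y - x)) with (x - y) in Hy by ring. lra.
Qed.

Lemma adm_facts u u1 u2 : admissible u u1 u2 -> exists Rs,
  (forall x, continuity_pt u x) /\ (forall x, continuity_pt u1 x) /\ (forall x, continuity_pt u2 x) /\
  (forall x, Rs < Rabs x -> u x = 0 /\ u1 x = 0 /\ u2 x = 0).
Proof.
intros [H1 [H2 [H3 [Rs Hz]]]]. exists Rs. split; [|split; [|split]].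
- intro x; exact (cder _ _ _ (H1 x)).
- intro x; exact (cder _ _ _ (H2 x)).
- exact H3.
- intros x Hx. split; [auto|].
  assert (Hu1 : forall y, Rs < Rabs y -> u1 y = 0).
  { intros y Hy. apply (deriv_zero_near u y). apply H1.
    destruct (out_nbhd Rs y Hy) as [d [Hd Hd']]. exists d. split; auto. }
  split. auto.
  apply (deriv_zero_near u1 x). apply H2.
  destruct (out_nbhd Rs x Hx) as [d [Hd Hd']]. exists d. split; auto.
Qed.

Definition Tset (p : R) (F : R -> R) (A B C K : R) : Prop :=
  exists u u1 u2, admissible u u1 u2 /\ integralR (fun x => u2 x ^ 2) A /\
    integralR (fun x => u1 x ^ 2) B /\ integralR (fun x => u x ^ 2) C /\ Kval p F u K.

Definition Qw (p : R) (F : R -> R) (beta W q : R) : Prop :=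
  exists A B C K, Tset p F A B C K /\ 0 < K /\ q = (A - beta * B + W * C) / Rpower K (2 / (p + 1)).

Lemma cpow2 f x : continuity_pt f x -> continuity_pt (fun y => f y ^ 2) x.
Proof. intro H.
  change (continuity_pt (fun y => f y * (f y * 1)) x).
  apply cmul; auto. apply cmul; auto. apply ccst. Qed.


Lemma dex (f : R -> R) y l : derivable_pt_lim f y l -> ex_derive f y.
Proof. intro H. exists l. apply is_derive_Reals. exact H. Qed.
Lemma dD (f : R -> R) y l : derivable_pt_lim f y l -> Derive f y = l.
Proof. intro H. apply is_derive_unique. apply is_derive_Reals. exact H. Qed.

Lemma iR_smul g v l : integralR g v -> integralR (fun x => l * g x) (l * v).
Proof.
intro H. assert (H' := iR_lin _ _ _ _ l 0 H H).
replace (l * v) with (l * v + 0 * v) by ring. eapply iR_ext; [|exact H']. intro; simpl; ring.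
Qed.

Lemma adm_ints u u1 u2 : admissible u u1 u2 -> exists A B C,
  integralR (fun x => u2 x ^ 2) A /\ integralR (fun x => u1 x ^ 2) B /\ integralR (fun x => u x ^ 2) C.
Proof.
intro Ha. destruct (adm_facts _ _ _ Ha) as [Rs [Cu [Cu1 [Cu2 Z]]]].
destruct (iR_compact' (fun x => u2 x ^ 2) Rs) as [A HA].
{ intro; apply cpow2; auto. } { intros x Hx; destruct (Z x Hx) as [_ [_ E]]; rewrite E; ring. }
destruct (iR_compact' (fun x => u1 x ^ 2) Rs) as [B HB].
{ intro; apply cpow2; auto. } { intros x Hx; destruct (Z x Hx) as [_ [E _]]; rewrite E; ring. }
destruct (iR_compact' (fun x => u x ^ 2) Rs) as [C HC].
{ intro; apply cpow2; auto. } { intros x Hx; destruct (Z x Hx) as [E _]; rewrite E; ring. }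
exists A, B, C; auto.
Qed.

Lemma ival_comb beta c u u1 u2 A B C :
  integralR (fun x => u2 x ^ 2) A -> integralR (fun x => u1 x ^ 2) B -> integralR (fun x => u x ^ 2) C ->
  Ival beta c u u1 u2 (A - beta * B + (1 - c^2) * C).
Proof.
intros HA HB HC. assert (H1 := iR_lin _ _ _ _ 1 (-beta) HA HB).
assert (H2 := iR_lin _ _ _ _ 1 (1 - c^2) H1 HC).
unfold Ival. replace (A - beta * B + (1 - c^2) * C) with (1 * (1 * A + - beta * B) + (1 - c ^ 2) * C) by ring.
eapply iR_ext; [|exact H2]. intro x; simpl; ring.
Qed.

Lemma quot_char p F beta c q : quot_set p F beta c q <-> Qw p F beta (1 - c^2) q.
Proof.
split.
- intros [u [u1 [u2 [Iv [Kv [Ha [HI [HK [HKp Hq]]]]]]]]].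
  destruct (adm_ints _ _ _ Ha) as [A [B [C [HA [HB HC]]]]].
  exists A, B, C, Kv. split. exists u, u1, u2. auto. split; auto.
  rewrite Hq. f_equal. exact (iR_unique _ _ _ HI (ival_comb beta c _ _ _ _ _ _ HA HB HC)).
- intros [A [B [C [K [[u [u1 [u2 [Ha [HA [HB [HC HK]]]]]]] [HKp Hq]]]]]].
  exists u, u1, u2, (A - beta * B + (1 - c^2) * C), K. split; [exact Ha| split; [apply ival_comb; auto | split; [exact HK | split; [exact HKp | exact Hq]]]].
Qed.

Lemma Tset_props p F A B C K : Tset p F A B C K -> 0 <= A /\ 0 <= B /\ 0 <= C /\ 2 * B <= A + C.
Proof.
intros [u [u1 [u2 [Ha [HA [HB [HC HK]]]]]]].
assert (Ha' := Ha). destruct Ha' as [D1 [D2 _]].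
destruct (adm_facts _ _ _ Ha) as [Rs [Cu [Cu1 [Cu2 Z]]]].
split; [|split; [|split]].
- apply (iR_ge0 _ _ (fun x => pow2_ge_0 _) HA).
- apply (iR_ge0 _ _ (fun x => pow2_ge_0 _) HB).
- apply (iR_ge0 _ _ (fun x => pow2_ge_0 _) HC).
- destruct (iR_compact' (fun x => u x * u2 x) Rs) as [D HD].
  { intro; apply cmul; auto. } { intros x Hx; destruct (Z x Hx) as [E _]; rewrite E; ring. }
  assert (H0 : integralR (fun x => u1 x * u1 x + u x * u2 x) 0).
  { apply (iR_ftc (fun x => u x * u1 x) _ Rs).
    - intro x. assert (H := derivable_pt_lim_mult u u1 x _ _ (D1 x) (D2 x)).
      replace (u1 x * u1 x + u x * u2 x) with (u1 x * u1 x + u x * u2 x) by ring.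
      eapply derivable_pt_lim_ext in H. exact H. reflexivity. 
    - intro x. apply continuity_pt_filterlim. apply cadd; apply cmul; auto.
    - intros x Hx; destruct (Z x Hx) as [E _]; rewrite E; ring. }
  assert (H1 := iR_lin _ _ _ _ 1 1 HB HD).
  assert (E1 : 1 * B + 1 * D = 0).
  { apply (iR_unique _ _ _ H1). eapply iR_ext; [|exact H0]. intro; simpl; ring. }
  assert (H2 := iR_lin _ _ _ _ 1 1 (iR_lin _ _ _ _ 1 2 HA HD) HC).
  assert (H3 : 0 <= 1 * (1 * A + 2 * D) + 1 * C).
  { eapply iR_ge0; [|exact H2]. intro x. simpl.
    replace (1 * (1 * (u2 x * (u2 x * 1)) + 2 * (u x * u2 x)) + 1 * (u x * (u x * 1)))
      with ((u2 x + u x) ^ 2) by ring. apply pow2_ge_0. }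
  lra.
Qed.


Lemma Tset_scale p F A B C K b : 0 < b -> Tset p F A B C K -> Tset p F (b^3*A) (b*B) (C/b) (K/b).
Proof.
intros Hb [u [u1 [u2 [Ha [HA [HB [HC HK]]]]]]].
assert (Ha' := Ha). destruct Ha' as [D1 [D2 [C2 [Rs Z]]]].
exists (fun x => u (b*x)), (fun x => b * u1 (b*x)), (fun x => b^2 * u2 (b*x)).
split; [|split; [|split; [|split]]].
- split; [|split; [|split]].
  + intro x. apply is_derive_Reals. auto_derive. exact (dex _ _ _ (D1 (b*x))).
    rewrite (dD (fun y => u y) _ _ (D1 (b*x))). ring.
  + intro x. apply is_derive_Reals. auto_derive. exact (dex _ _ _ (D2 (b*x))).
    rewrite (dD (fun y => u1 y) _ _ (D2 (b*x))). ring.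
  + intro x. apply cmul. apply ccst. apply ccomp; [|apply C2].
    apply (cder _ _ b). apply is_derive_Reals. auto_derive; try ring; auto.
  + exists (Rs / b). intros x Hx. apply Z. rewrite Rabs_mult, (Rabs_right b) by lra.
    apply Rmult_lt_compat_l with (r := b) in Hx; [|lra].
    replace (b * (Rs / b)) with Rs in Hx by (field; lra). exact Hx.
- assert (H := iR_smul _ _ (b^4) (iR_scale _ _ b Hb HA)).
  replace (b^3*A) with (b^4 * (A / b)) by (field; lra).
  eapply iR_ext; [|exact H]. intro x; simpl; ring.
- assert (H := iR_smul _ _ (b^2) (iR_scale _ _ b Hb HB)).
  replace (b*B) with (b^2 * (B / b)) by (field; lra).
  eapply iR_ext; [|exact H]. intro x; simpl; ring.
- exact (iR_scale _ _ b Hb HC).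
- exact (iR_scale _ _ b Hb HK).
Qed.

Lemma Qw_scale p F beta W q t : Qw p F beta W q ->
  Qw p F (exp (2*t) * beta) (exp (4*t) * W) (exp ((3 + 2/(p+1)) * t) * q).
Proof.
intros [A [B [C [K [HT [HK Hq]]]]]].
set (s := 2 / (p+1)) in *. set (b := exp t).
assert (Hb : 0 < b) by apply exp_pos.
exists (b^3*A), (b*B), (C/b), (K/b). split; [apply Tset_scale; auto|]. split.
{ apply Rdiv_lt_0_compat; auto. }
assert (E1 : exp (2*t) = b * b) by (unfold b; rewrite <- exp_plus; f_equal; ring).
assert (E2 : exp (4*t) = b * b * b * b) by (unfold b; rewrite <- !exp_plus; f_equal; ring).
assert (E3 : exp ((3 + s) * t) = b * b * b * exp (s * t)) by (unfold b; rewrite <- !exp_plus; f_equal; ring).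
assert (E4 : Rpower (K / b) s = Rpower K s / exp (s * t)).
{ unfold Rpower. rewrite ln_div by auto. unfold b; rewrite ln_exp.
  replace (s * (ln K - t)) with (s * ln K + - (s * t)) by ring. rewrite exp_plus, exp_Ropp. field.
  apply Rgt_not_eq, exp_pos. }
fold s. rewrite E1, E2, E3, E4, Hq.
assert (0 < Rpower K s) by apply exp_pos. assert (0 < exp (s*t)) by apply exp_pos.
field. lra.
Qed.


Lemma glb_unique E m m' : is_glb E m -> is_glb E m' -> m = m'.
Proof. intros [H1 H2] [H3 H4]. apply Rle_antisym; auto. Qed.

Lemma inf_of_eq E m : is_glb E m -> inf_of E = m.
Proof.
intro H. unfold inf_of. apply (glb_unique E); auto.
apply (epsilon_spec (inhabits 0) (fun m => is_glb E m)). exists m; auto.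
Qed.

Lemma glb_scale (E1 E2 : R -> Prop) mu m : 0 < mu -> (forall q, E1 q <-> E2 (mu * q)) ->
  is_glb E2 m -> is_glb E1 (m / mu).
Proof.
intros Hmu HE [H1 H2]. split.
- intros x Hx. apply HE in Hx. apply H1 in Hx.
  apply Rmult_le_reg_l with mu; auto. replace (mu * (m / mu)) with m by (field; lra). exact Hx.
- intros b Hb. assert (b * mu <= m).
  { apply H2. intros y Hy. replace y with (mu * (y / mu)) in Hy by (field; lra).
    apply HE in Hy. apply Hb in Hy.
    apply Rmult_le_reg_r with (/ mu). apply Rinv_0_lt_compat; auto.
    replace (b * mu * / mu) with b by (field; lra). exact Hy. }
  apply Rmult_le_reg_r with mu; auto. replace (m / mu * mu) with m by (field; lra). exact H.
Qed.

Lemma glb_exists (E : R -> Prop) : (exists x, E x) -> (forall x, E x -> 0 <= x) -> exists m, is_glb E m.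
Proof.
intros [x0 Hx0] Hlb.
destruct (completeness (fun y => E (- y))) as [l [Hl1 Hl2]].
{ exists 0. intros y Hy. apply Hlb in Hy. lra. }
{ exists (- x0). rewrite Ropp_involutive. auto. }
exists (- l). split.
- intros x Hx. assert (x <= x) by lra. enough (- x <= l) by lra. apply Hl1. rewrite Ropp_involutive; auto.
- intros b Hb. enough (l <= - b) by lra. apply Hl2. intros y Hy. apply Hb in Hy. lra.
Qed.


Lemma set_scale p F beta c t : exp (4*t) * (1 - c^2) = 1 -> forall q,
  quot_set p F beta c q <-> quot_set p F (exp (2*t) * beta) 0 (exp ((3 + 2/(p+1)) * t) * q).
Proof.
intros Ht q. rewrite !quot_char. split.
- intro H. apply (Qw_scale _ _ _ _ _ t) in H. rewrite Ht in H.
  replace (1 - 0^2) with 1 by ring. exact H.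
- intro H. replace (1 - 0^2) with 1 in H by ring. apply (Qw_scale _ _ _ _ _ (-t)) in H.
  assert (X1 : exp (2 * - t) * (exp (2 * t) * beta) = beta)
    by (rewrite <- Rmult_assoc, <- exp_plus;
        replace (2 * - t + 2 * t) with 0 by ring; rewrite exp_0; ring).
  assert (X2 : exp ((3 + 2 / (p + 1)) * - t) * (exp ((3 + 2 / (p + 1)) * t) * q) = q)
    by (rewrite <- Rmult_assoc, <- exp_plus;
        replace ((3 + 2 / (p + 1)) * - t + (3 + 2 / (p + 1)) * t) with 0 by ring; rewrite exp_0; ring).
  rewrite X1, X2 in H.
  replace (exp (4 * - t) * 1) with (1 - c^2) in H. exact H.
  replace (4 * - t) with (- (4 * t)) by ring. rewrite exp_Ropp.
  assert (exp (4*t) > 0) by apply exp_pos.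
  apply Rmult_eq_reg_l with (exp (4*t)). rewrite Ht. field. lra. lra.
Qed.

Lemma memQ p F A B C K r c : Tset p F A B C K -> 0 < K ->
  quot_set p F r c ((A - r * B + (1 - c^2) * C) / Rpower K (2 / (p+1))).
Proof. intros HT HK. apply quot_char. exists A, B, C, K. auto. Qed.

Lemma q_nonneg p F A B C K r : Tset p F A B C K -> 0 < K -> r < 2 ->
  0 <= (A - r * B + (1 - 0^2) * C) / Rpower K (2 / (p+1)).
Proof.
intros HT HK Hr. destruct (Tset_props _ _ _ _ _ _ HT) as [HA [HB [HC HABC]]].
assert (0 < Rpower K (2/(p+1))) by apply exp_pos.
apply Rdiv_le_0_compat; auto.
destruct (Rle_or_lt r 0); nra.
Qed.

Definition NE p F := exists A B C K, Tset p F A B C K /\ 0 < K.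

Lemma glb_r p F r : NE p F -> r < 2 -> is_glb (quot_set p F r 0) (m_fun p F r 0) /\ 0 <= m_fun p F r 0.
Proof.
intros [A [B [C [K [HT HK]]]]] Hr.
destruct (glb_exists (quot_set p F r 0)) as [m Hm].
- eexists. apply (memQ p F _ _ _ _ r 0 HT HK).
- intros x Hx. apply quot_char in Hx. destruct Hx as [A' [B' [C' [K' [HT' [HK' ->]]]]]].
  apply (q_nonneg p F) with (B := B'); auto.
- unfold m_fun. rewrite (inf_of_eq _ _ Hm). split; auto.
  apply (proj2 Hm). intros x Hx. apply quot_char in Hx. destruct Hx as [A' [B' [C' [K' [HT' [HK' ->]]]]]].
  apply (q_nonneg p F) with (B := B'); auto.
Qed.

Lemma dichotomy p F : NE p F ->
  (forall r, r < 2 -> m_fun p F r 0 = 0) \/ (forall r, r < 2 -> 0 < m_fun p F r 0).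
Proof.
intros HNE. set (M := fun r => m_fun p F r 0).
destruct (classic (exists r0, r0 < 2 /\ M r0 = 0)) as [[r0 [Hr0 HM0]]|Hn].
- left. intros r Hr. fold (M r).
  destruct (glb_r p F r HNE Hr) as [[Hlb _] Hpos]. fold (M r) in Hlb, Hpos.
  destruct (glb_r p F r0 HNE Hr0) as [[_ Hgl0] _]. fold (M r0) in Hgl0.
  destruct (Rle_or_lt r0 r) as [Hle|Hlt].
  + enough (M r <= M r0) by lra. apply Hgl0. intros q Hq.
    apply quot_char in Hq. destruct Hq as [A [B [C [K [HT [HK ->]]]]]].
    destruct (Tset_props _ _ _ _ _ _ HT) as [HA [HB [HC HABC]]].
    apply Rle_trans with ((A - r * B + (1 - 0^2) * C) / Rpower K (2 / (p+1))).
    apply Hlb. apply memQ; auto.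
    assert (0 < Rpower K (2/(p+1))) by apply exp_pos.
    apply Rmult_le_compat_r. left; apply Rinv_0_lt_compat; auto. nra.
  + set (r' := (r0 + 2) / 2). assert (Hr' : r' < 2) by (unfold r'; lra).
    destruct (glb_r p F r' HNE Hr') as [[Hlb' _] Hpos']. fold (M r') in Hlb', Hpos'.
    set (t := (r' - r0) / (r' - r)).
    assert (Ht : 0 < t < 1).
    { unfold t, r'. split. apply Rdiv_lt_0_compat; lra.
      apply Rmult_lt_reg_r with ((r0+2)/2 - r). lra. field_simplify; lra. }
    assert (t * M r + (1 - t) * M r' <= M r0).
    { apply Hgl0. intros q Hq.
      apply quot_char in Hq. destruct Hq as [A [B [C [K [HT [HK ->]]]]]].
      assert (E1 := Hlb _ (memQ p F _ _ _ _ r 0 HT HK)).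
      assert (E2 := Hlb' _ (memQ p F _ _ _ _ r' 0 HT HK)).
      set (P := Rpower K (2 / (p + 1))) in *.
      assert (0 < P) by apply exp_pos.
      replace ((A - r0 * B + (1 - 0 ^ 2) * C) / P) with
        (t * ((A - r * B + (1 - 0 ^ 2) * C) / P) + (1 - t) * ((A - r' * B + (1 - 0 ^ 2) * C) / P)).
      nra. unfold t. field. split; [lra|]. unfold r'; lra. }
    nra.
- right. intros r Hr. destruct (glb_r p F r HNE Hr) as [_ H].
  destruct H as [H|H]; auto. exfalso. apply Hn. exists r; split; auto.
Qed.


Lemma sqrt_exp x : 0 < x -> sqrt x = exp (ln x / 2).
Proof.
intro Hx. rewrite <- (sqrt_square (exp (ln x / 2))) by (left; apply exp_pos).
f_equal. rewrite <- exp_plus. replace (ln x / 2 + ln x / 2) with (ln x) by field. rewrite exp_ln; auto.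
Qed.

Lemma ln_0' : ln 0 = 0.
Proof. unfold ln. destruct (Rlt_dec 0 0) as [r|]; [exfalso; exact (Rlt_irrefl 0 r)|reflexivity]. Qed.

Definition alp p := ((p+1)/(p-1)) * (3 + 2/(p+1)) / 4.

Lemma d_structure p F : 1 < p ->
  (exists K0, forall beta c, dom beta c -> d_fun p F beta c = K0) \/
  (forall beta c, dom beta c -> d_fun p F beta c =
     exp (alp p * ln (1 - c^2)) * d_fun p F (beta * exp (- (1/2) * ln (1 - c^2))) 0).
Proof.
intro Hp.
destruct (classic (NE p F)) as [HNE|HNE].
2:{ left. exists (d_fun p F 0 0). intros beta c _.
    assert (E : forall b c, quot_set p F b c = fun _ => False).
    { intros b c'. apply functional_extensionality. intro q. apply propositional_extensionality.
      split; [|tauto]. intro Hq. apply HNE. apply quot_char in Hq.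
      destruct Hq as [A [B [C [K [HT [HK _]]]]]]. exists A, B, C, K. auto. }
    unfold d_fun, m_fun. rewrite !E. reflexivity. }
assert (Key : forall beta c, dom beta c ->
  m_fun p F beta c = m_fun p F (beta * exp (- (1/2) * ln (1 - c^2))) 0 /
                      exp ((3 + 2/(p+1)) * (- ln (1 - c^2) / 4))).
{ intros beta c [Hc Hb]. set (L := 1 - c^2) in *. assert (HL : 0 < L) by (unfold L; lra).
  set (t := - ln L / 4).
  assert (Ht : exp (4*t) * (1 - c^2) = 1).
  { unfold t. fold L. replace (4 * (- ln L / 4)) with (- ln L) by field.
    rewrite exp_Ropp, exp_ln by auto. field; lra. }
  assert (Er : beta * exp (- (1/2) * ln L) = exp (2*t) * beta).
  { unfold t. rewrite Rmult_comm. f_equal. f_equal. field. }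
  rewrite Er.
  assert (Hr : exp (2*t) * beta < 2).
  { rewrite sqrt_exp in Hb by auto.
    assert (E2 : exp (2*t) * exp (ln L / 2) = 1).
    { rewrite <- exp_plus. unfold t. replace (2 * (- ln L / 4) + ln L / 2) with 0 by field. apply exp_0. }
    assert (0 < exp (2*t)) by apply exp_pos.
    apply Rmult_lt_compat_l with (r := exp (2*t)) in Hb; auto. nra. }
  destruct (glb_r p F _ HNE Hr) as [Hg _].
  apply inf_of_eq. apply glb_scale with (E2 := quot_set p F (exp (2 * t) * beta) 0).
  apply exp_pos. apply set_scale; auto. exact Hg. }
destruct (dichotomy p F HNE) as [Z|Pos].
- left. exists ((p - 1) / (2 * (p + 1)) * Rpower 0 ((p + 1) / (p - 1))).
  intros beta c Hd. unfold d_fun. rewrite Key by auto. rewrite Z.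
  unfold Rdiv at 2. rewrite Rmult_0_l. reflexivity.
  destruct Hd as [Hc Hb]. rewrite sqrt_exp in Hb by lra.
  assert (E2 : exp (- (1/2) * ln (1 - c^2)) * exp (ln (1-c^2) / 2) = 1).
  { rewrite <- exp_plus. replace (- (1/2) * ln (1-c^2) + ln (1-c^2) / 2) with 0 by field. apply exp_0. }
  assert (0 < exp (- (1/2) * ln (1 - c^2))) by apply exp_pos.
  apply Rmult_lt_compat_r with (r := exp (- (1/2) * ln (1 - c^2))) in Hb; auto. nra.
- right. intros beta c Hd. unfold d_fun at 1. rewrite Key by auto.
  set (r := beta * exp (- (1 / 2) * ln (1 - c ^ 2))).
  assert (Hr : r < 2).
  { destruct Hd as [Hc Hb]. rewrite sqrt_exp in Hb by lra.
    assert (E2 : exp (- (1/2) * ln (1 - c^2)) * exp (ln (1-c^2) / 2) = 1).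
    { rewrite <- exp_plus. replace (- (1/2) * ln (1-c^2) + ln (1-c^2) / 2) with 0 by field. apply exp_0. }
    assert (0 < exp (- (1/2) * ln (1 - c^2))) by apply exp_pos.
    apply Rmult_lt_compat_r with (r := exp (- (1/2) * ln (1 - c^2))) in Hb; auto. unfold r. nra. }
  assert (HM := Pos r Hr). unfold d_fun. unfold Rpower.
  rewrite ln_div; [|exact HM|apply exp_pos]. rewrite ln_exp.
  rewrite (Rmult_comm (exp (alp p * _))), Rmult_assoc. f_equal.
  rewrite <- exp_plus. f_equal. unfold alp. field. lra.
Qed.


Lemma frechet_partial g x y gx gy : frechet_at g x y gx gy ->
  derivable_pt_lim (fun t => g x t) y gy /\ derivable_pt_lim (fun t => g t y) x gx.
Proof.
intro H. split; intros eps Heps; destruct (H (eps/2) ltac:(lra)) as [d [Hd Hh]];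
  exists (mkposreal d Hd); intros h Hh0 Hhd; simpl in Hhd.
- assert (E := Hh 0 h). replace (sqrt (0^2 + h^2)) with (Rabs h) in E
    by (rewrite <- sqrt_Rsqr_abs; f_equal; unfold Rsqr; ring).
  rewrite Rplus_0_r in E. specialize (E Hhd).
  replace ((g x (y + h) - g x y) / h - gy) with ((g x (y + h) - g x y - gx * 0 - gy * h) / h) by (field; auto).
  unfold Rdiv. rewrite Rabs_mult, Rabs_inv.
  apply Rmult_le_compat_r with (r := / Rabs h) in E. 2:{ left; apply Rinv_0_lt_compat, Rabs_pos_lt; auto. }
  replace (eps / 2 * Rabs h * / Rabs h) with (eps/2) in E by (field; apply Rabs_no_R0; auto). lra.
- assert (E := Hh h 0). replace (sqrt (h^2 + 0^2)) with (Rabs h) in E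
    by (rewrite <- sqrt_Rsqr_abs; f_equal; unfold Rsqr; ring).
  rewrite Rplus_0_r in E. specialize (E Hhd).
  replace ((g (x + h) y - g x y) / h - gx) with ((g (x + h) y - g x y - gx * h - gy * 0) / h) by (field; auto).
  unfold Rdiv. rewrite Rabs_mult, Rabs_inv.
  apply Rmult_le_compat_r with (r := / Rabs h) in E. 2:{ left; apply Rinv_0_lt_compat, Rabs_pos_lt; auto. }
  replace (eps / 2 * Rabs h * / Rabs h) with (eps/2) in E by (field; apply Rabs_no_R0; auto). lra.
Qed.

Lemma dom_open beta c0 : dom beta c0 -> exists del, 0 < del /\ forall c, Rabs (c - c0) < del -> dom beta c.
Proof.
intros [H1 H2].
set (f := fun c => 2 * sqrt (1 - c^2) - beta).
assert (Cf : continuity_pt f c0).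
{ unfold f. apply (continuity_pt_minus (fun c => 2 * sqrt (1 - c^2)) (fun _ => beta)).
  apply cmul. apply ccst. apply ccomp. apply (cder _ _ (- 2 * c0)). apply is_derive_Reals. auto_derive; auto. ring.
  apply continuity_pt_sqrt. lra. apply ccst. }
set (g := fun c => 1 - c^2).
assert (Cg : continuity_pt g c0). { apply (cder _ _ (- 2 * c0)). apply is_derive_Reals. unfold g. auto_derive; auto. ring. }
assert (Pf : 0 < f c0) by (unfold f; lra). assert (Pg : 0 < g c0) by (unfold g; lra).
destruct (Cf (f c0) Pf) as [d1 [Hd1 E1]]. destruct (Cg (g c0) Pg) as [d2 [Hd2 E2]].
exists (Rmin d1 d2). split. apply Rmin_pos; auto. intros c Hc.
assert (A1 := E1 c). assert (A2 := E2 c). simpl in A1, A2. unfold R_dist in A1, A2.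
assert (Hc1 : Rabs (c - c0) < d1) by (apply Rlt_le_trans with (1 := Hc); apply Rmin_l).
assert (Hc2 : Rabs (c - c0) < d2) by (apply Rlt_le_trans with (1 := Hc); apply Rmin_r).
destruct (Req_dec c0 c) as [<-|Hne]. split; auto.
assert (Dx : D_x no_cond c0 c) by (split; [exact I| exact Hne]).
specialize (A1 (conj Dx Hc1)). specialize (A2 (conj Dx Hc2)).
apply Rabs_def2 in A1. apply Rabs_def2 in A2. unfold f, g in *. split; lra.
Qed.

Definition Ef c := exp (-(1/2) * ln (1 - c^2)).
Definition Xf (a c : R) := exp (a * ln (1 - c^2)).

Lemma Ef_der c : c^2 < 1 -> derivable_pt_lim Ef c (Ef c * c / (1 - c^2)).
Proof. intro H. apply is_derive_Reals. unfold Ef. auto_derive; replace (1 + - (c * (c * 1))) with (1 - c^2) by ring. lra. field. lra. Qed.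
Lemma Xf_der a c : c^2 < 1 -> derivable_pt_lim (Xf a) c (Xf a c * (a * (- 2 * c)) / (1 - c^2)).
Proof. intro H. apply is_derive_Reals. unfold Xf. auto_derive; replace (1 + - (c * (c * 1))) with (1 - c^2) by ring. lra. field. lra. Qed.


Lemma phi_der (G G1 : R -> R) a beta c : c^2 < 1 -> derivable_pt_lim G (beta * Ef c) (G1 (beta * Ef c)) ->
  derivable_pt_lim (fun t => Xf a t * G (beta * Ef t)) c
    (Xf a c * (a * (-2*c)) / (1 - c^2) * G (beta * Ef c) + Xf a c * (beta * (Ef c * c / (1 - c^2))) * G1 (beta * Ef c)).
Proof.
intros Hc HG. apply is_derive_Reals. auto_derive.
- split. exact (dex _ _ _ (Xf_der a c Hc)). split. exact (dex (fun x => G x) _ _ HG).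
  split. exact (dex _ _ _ (Ef_der c Hc)). exact I.
- rewrite (dD (fun x => Xf a x) _ _ (Xf_der a c Hc)), (dD (fun x => G x) _ _ HG), (dD (fun x => Ef x) _ _ (Ef_der c Hc)).
  field. lra.
Qed.

Definition Psi (G G1 : R -> R) a beta t :=
  Xf a t * (a * (-2*t)) / (1 - t^2) * G (beta * Ef t) + Xf a t * (beta * (Ef t * t / (1 - t^2))) * G1 (beta * Ef t).

Lemma psi_der (G G1 G2 : R -> R) a k c : c^2 < 1 ->
  derivable_pt_lim G k (G1 k) -> derivable_pt_lim G1 k (G2 k) ->
  derivable_pt_lim (Psi G G1 a (k * sqrt (1 - c^2))) c
    (Xf a c / (1 - c^2)^2 * ((- 2*a * G k + k * G1 k) +
       (2*a*G k - k * G1 k + 2*a*(2*a-2) * G k - 2*a*k*G1 k - (2*a-3)*k*G1 k + k^2 * G2 k) * c^2)).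
Proof.
intros Hc HG HG1.
assert (HL : 0 < 1 - c^2) by lra.
set (w := sqrt (1 - c^2)).
assert (Hw : 0 < w) by (apply sqrt_lt_R0; lra).
assert (Hww : w * w = 1 - c^2) by (apply sqrt_sqrt; lra).
assert (HE : Ef c = / w).
{ unfold Ef, w. rewrite sqrt_exp by lra. rewrite <- exp_Ropp. f_equal. field. }
assert (Hk : k * w * Ef c = k) by (rewrite HE; field; lra).
rewrite <- Hk in HG, HG1.
apply is_derive_Reals. unfold Psi. auto_derive.
- repeat split; try nra; first [exact (dex _ _ _ (Xf_der a c Hc)) | exact (dex _ _ _ (Ef_der c Hc)) | exact (dex (fun x => G x) _ _ HG) | exact (dex (fun x => G1 x) _ _ HG1)].
- rewrite (dD (fun x => Xf a x) _ _ (Xf_der a c Hc)), (dD (fun x => G x) _ _ HG), (dD (fun x => Ef x) _ _ (Ef_der c Hc)),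
    (dD (fun x => G1 x) _ _ HG1).
  rewrite Hk.
  transitivity (Xf a c / (w*w)^2 * ((w*w) * (- 2*a * G k + k * G1 k) +
     c^2 * (2*a*(2*a-2) * G k - 2*a*k*G1 k - (2*a-3)*k*G1 k + k^2 * G2 k))).
  + replace (1 + - (c * (c * 1))) with (w * w) by (rewrite Hww; ring).
    rewrite <- Hww, HE. field. lra.
  + rewrite Hww. field. lra.
Qed.


Lemma deriv_const_near f x l K : derivable_pt_lim f x l ->
  (exists del, 0 < del /\ forall y, Rabs (y - x) < del -> f y = K) -> l = 0.
Proof.
intros H E. apply (deriv_local f (fct_cte K)) in H; [|exact E].
exact (uniqueness_limite _ _ _ _ H (derivable_pt_lim_const K x)).
Qed.

Lemma r_lt2 beta c : dom beta c -> beta * Ef c < 2.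
Proof.
intros [Hc Hb]. unfold Ef. rewrite sqrt_exp in Hb by lra.
assert (E2 : exp (- (1/2) * ln (1 - c^2)) * exp (ln (1-c^2) / 2) = 1).
{ rewrite <- exp_plus. replace (- (1/2) * ln (1-c^2) + ln (1-c^2) / 2) with 0 by field. apply exp_0. }
assert (0 < exp (- (1/2) * ln (1 - c^2))) by apply exp_pos.
apply Rmult_lt_compat_r with (r := exp (- (1/2) * ln (1 - c^2))) in Hb; auto. nra.
Qed.

Lemma dom_r0 r : r < 2 -> dom r 0.
Proof. intro H. split. lra. replace (1 - 0^2) with 1 by ring. rewrite sqrt_1. lra. Qed.

Lemma sign_lemma P Q c1 c2 c3 X1 X2 X3 : 0 <= c1 -> c1 < c2 -> c2 < c3 -> 0 < X1 -> 0 < X2 -> 0 < X3 ->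
  X1 * (P + Q * c1^2) * (X2 * (P + Q * c2^2)) < 0 ->
  X2 * (P + Q * c2^2) * (X3 * (P + Q * c3^2)) < 0 -> False.
Proof.
intros H0 H1 H2 HX1 HX2 HX3 A B.
set (h1 := P + Q * c1^2) in *. set (h2 := P + Q * c2^2) in *. set (h3 := P + Q * c3^2) in *.
assert (A' : h1 * h2 < 0).
{ replace (X1 * h1 * (X2 * h2)) with ((X1 * X2) * (h1 * h2)) in A by ring.
  destruct (Rle_or_lt 0 (h1*h2)); auto. assert (0 < X1 * X2) by nra. nra. }
assert (B' : h2 * h3 < 0).
{ replace (X2 * h2 * (X3 * h3)) with ((X2 * X3) * (h2 * h3)) in B by ring.
  destruct (Rle_or_lt 0 (h2*h3)); auto. assert (0 < X2 * X3) by nra. nra. }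
set (t1 := c1^2) in *. set (t2 := c2^2) in *. set (t3 := c3^2) in *.
assert (T1 : t1 < t2) by (unfold t1, t2; nra). assert (T2 : t2 < t3) by (unfold t2, t3; nra).
assert (E : h2 * h2 * (t3 - t1) = (t3 - t2) * (h1 * h2) + (t2 - t1) * (h2 * h3)) by (unfold h1, h2, h3; ring).
assert (0 <= h2 * h2) by nra. nra.
Qed.

Theorem main_core :
  forall (p : R) (F : R -> R), 1 < p ->
    forall D1 D2 D11 D12 D21 D22 : R -> R -> R,
    diff_on_dom (d_fun p F) D1 D2 ->
    diff_on_dom D1 D11 D12 ->
    diff_on_dom D2 D21 D22 ->
    forall k : R, k < 2 ->
    ~ (exists c1 c2 c3 : R,
         0 <= c1 /\ c1 < c2 /\ c2 < c3 /\ c3 < 1 /\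
         D22 (k * sqrt (1 - c1^2)) c1 * D22 (k * sqrt (1 - c2^2)) c2 < 0 /\
         D22 (k * sqrt (1 - c2^2)) c2 * D22 (k * sqrt (1 - c3^2)) c3 < 0).
Proof.
intros p F Hp D1 D2 D11 D12 D21 D22 Hd HD1 HD2 k Hk [c1 [c2 [c3 [H0 [H1 [H2 [H3 [A B]]]]]]]].
set (d := d_fun p F) in *.
assert (Hdom : forall c, 0 <= c < 1 -> dom (k * sqrt (1 - c^2)) c).
{ intros c Hc. assert (0 < sqrt (1 - c^2)) by (apply sqrt_lt_R0; nra). split. nra. nra. }
destruct (d_structure p F Hp) as [[K0 HK0]|Hf].
- assert (HD2z : forall beta c, dom beta c -> D2 beta c = 0).
  { intros beta c Hbc. destruct (frechet_partial _ _ _ _ _ (Hd beta c Hbc)) as [Dc _].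
    apply (deriv_const_near _ _ _ K0 Dc). destruct (dom_open _ _ Hbc) as [del [Hdel Hn]].
    exists del. split; [exact Hdel|]. intros y Hy. apply HK0; auto. }
  assert (Z : forall c, 0 <= c < 1 -> D22 (k * sqrt (1 - c^2)) c = 0).
  { intros c Hc. destruct (frechet_partial _ _ _ _ _ (HD2 _ c (Hdom c Hc))) as [Dc _].
    apply (deriv_const_near _ _ _ 0 Dc). destruct (dom_open _ _ (Hdom c Hc)) as [del [Hdel Hn]].
    exists del. split; [exact Hdel|]. intros y Hy. apply HD2z; auto. }
  rewrite (Z c1) in A. lra. lra.
- set (a := alp p).
  set (G := fun r => d r 0). set (G1 := fun r => D1 r 0). set (G2 := fun r => D11 r 0).
  assert (HG : forall r, r < 2 -> derivable_pt_lim G r (G1 r)).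
  { intros r Hr. exact (proj2 (frechet_partial _ _ _ _ _ (Hd r 0 (dom_r0 r Hr)))). }
  assert (HG1 : forall r, r < 2 -> derivable_pt_lim G1 r (G2 r)).
  { intros r Hr. exact (proj2 (frechet_partial _ _ _ _ _ (HD1 r 0 (dom_r0 r Hr)))). }
  assert (StepA : forall beta c, dom beta c -> D2 beta c = Psi G G1 a beta c).
  { intros beta c Hbc. destruct (frechet_partial _ _ _ _ _ (Hd beta c Hbc)) as [Dc _].
    assert (Hc : c^2 < 1) by (destruct Hbc; auto).
    assert (P := phi_der G G1 a beta c Hc (HG _ (r_lt2 _ _ Hbc))).
    apply (deriv_local _ (fun t => d beta t)) in P.
    exact (uniqueness_limite _ _ _ _ Dc P).
    destruct (dom_open _ _ Hbc) as [del [Hdel Hn]]. exists del. split; auto.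
    intros y Hy. symmetry. apply (Hf beta y (Hn y Hy)). }
  assert (StepB : forall c, 0 <= c < 1 -> D22 (k * sqrt (1 - c^2)) c =
     Xf a c / (1 - c^2)^2 * ((- 2*a * G k + k * G1 k) +
       (2*a*G k - k * G1 k + 2*a*(2*a-2) * G k - 2*a*k*G1 k - (2*a-3)*k*G1 k + k^2 * G2 k) * c^2)).
  { intros c Hc. assert (Hc2 : c^2 < 1) by nra.
    destruct (frechet_partial _ _ _ _ _ (HD2 _ c (Hdom c Hc))) as [Dc _].
    assert (P := psi_der G G1 G2 a k c Hc2 (HG k Hk) (HG1 k Hk)).
    apply (deriv_local _ (fun t => D2 (k * sqrt (1 - c^2)) t)) in P.
    exact (uniqueness_limite _ _ _ _ Dc P).
    destruct (dom_open _ _ (Hdom c Hc)) as [del [Hdel Hn]]. exists del. split; auto.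
    intros y Hy. symmetry. apply StepA. auto. }
  rewrite !StepB in A by lra. rewrite !StepB in B by lra.
  assert (Pos : forall c, 0 <= c < 1 -> 0 < Xf a c / (1 - c^2)^2).
  { intros c Hc. apply Rdiv_lt_0_compat. apply exp_pos. apply pow_lt. nra. }
  exact (sign_lemma (- 2*a * G k + k * G1 k)
    (2*a*G k - k * G1 k + 2*a*(2*a-2) * G k - 2*a*k*G1 k - (2*a-3)*k*G1 k + k^2 * G2 k)
    c1 c2 c3 _ _ _ H0 H1 H2 (Pos c1 ltac:(lra)) (Pos c2 ltac:(lra)) (Pos c3 ltac:(lra)) A B).
Qed.


Theorem mainTheorem19 :
  forall (p : R) (f f1 f2 F : R -> R),
    1 < p ->
    (* f is C^2 *)
    (forall s, derivable_pt_lim f s (f1 s)) ->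
    (forall s, derivable_pt_lim f1 s (f2 s)) ->
    continuity f2 ->
    (* f homogeneous of degree p *)
    (forall lam s, 0 < lam -> f (lam * s) = Rpower lam p * f s) ->
    (* F = int_0^s f *)
    F 0 = 0 ->
    (forall s, derivable_pt_lim F s (f s)) ->
    (exists s, 0 < F s) ->
    (* d is twice differentiable on its domain; Dij are its second partials *)
    forall D1 D2 D11 D12 D21 D22 : R -> R -> R,
    diff_on_dom (d_fun p F) D1 D2 ->
    diff_on_dom D1 D11 D12 ->
    diff_on_dom D2 D21 D22 ->
    forall k : R, k < 2 ->
    ~ (exists c1 c2 c3 : R,
         0 <= c1 /\ c1 < c2 /\ c2 < c3 /\ c3 < 1 /\
         D22 (k * sqrt (1 - c1^2)) c1 * D22 (k * sqrt (1 - c2^2)) c2 < 0 /\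
         D22 (k * sqrt (1 - c2^2)) c2 * D22 (k * sqrt (1 - c3^2)) c3 < 0).
Proof.
intros p f f1 f2 F Hp _ _ _ _ _ _ _ D1 D2 D11 D12 D21 D22 Hd HD1 HD2 k Hk.
exact (main_core p F Hp D1 D2 D11 D12 D21 D22 Hd HD1 HD2 k Hk).
Qed.
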